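(* Assume the setup below and let $\boldsymbol{\lambda}\in\mathcal{P}(l,n)$. There exists a unique $l$-tuple $\tilde{\mathbf{C}}=(\tilde{C}^0,\dots,\tilde{C}^{l-1})$ of strictly decreasing sequences of integers such that (ii) $\tilde{C}_{[t]}=C_{[t]}(\boldsymbol{\lambda})$ as multisets for all $0\le t\le d$; (iii) $\tilde{C}^p\subseteq\tilde{C}^{p-1}$ (as sets) for every $p\in J$ with $p\ne0$; (iv) if $0\in I_0$, then $S^{-1}\tilde{C}^0\subseteq\tilde{C}^{l-1}$. Here $\tilde{C}_{[t]}$ is formed from $\tilde{\mathbf{C}}$ by the same recipe as $C_{[t]}(\boldsymbol{\lambda})$ is formed from $\mathbf{C}(\boldsymbol{\lambda})$.
   Context: Fix positive integers $l,n$. Partitions, Young diagrams, contents, $\mathcal{P}(l,n)$ ($l$-multipartitions of $n$) are as usual. For $r\in\mathbb{Z}$, $\beta^r(\lambda)=(\lambda_i+r+1-i)_{i\ge1}$. For a strictly decreasing integer sequence $C$ and $i\in\mathbb{Z}$, $S^iC=(C_1+i,C_2+i,\dots)$. Parameters: $H_1,\dots,H_{l-1}\in\mathbb{Q}$, $H_0=-(H_1+\dots+H_{l-1})$, $d$ a positive integer with $dH_i\in\mathbb{Z}$. Put $\theta=(1+H_0,H_1,\dots,H_{l-1})$. Let $S_l$ be the permutations of $\{0,\dots,l-1\}$, generated by $s_i$ ($1\le i\le l-1$) transposing $i-1,i$, acting on $\mathbb{Q}^l$ by: $s_i\cdot\theta$ has entry $\theta_{i-1}+\theta_i$ in position $i-1$,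 $-\theta_i$ in position $i$, $\theta_i+\theta_{i+1}$ in position $i+1$, otherwise unchanged (indices mod $l$). Let $R\subset\mathbb{Z}^l$ be generated by $\alpha_i=-e_{i-1}+2e_i-e_{i+1}$ (indices mod $l$), $\tilde{S}_l=R\rtimes S_l$ acting on $\{\theta\in\mathbb{Q}^l:\sum\theta_i=1\}$ with $R$ by translations, $\mathbb{Z}^l_0$ the integer vectors of coordinate sum $0$, and $\phi(\mathbf{r})=\sum_j(r_{j-1}-r_j)e_j$ (indices mod $l$). Fix $w_\theta=\phi(\mathbf{r})w\in\tilde{S}_l$ ($\mathbf{r}\in\mathbb{Z}^l_0$, $w\in S_l$) with $\boldsymbol{\epsilon}=w_\theta\cdot\theta$ satisfying $0\le\varepsilon_i\le1$; let $J=\{j:\varepsilon_j=0\}$; then $d\boldsymbol{\epsilon}\in\mathbb{Z}^l$. Let $m_i(\mathbf{c})=c_0+\dots+c_i$ and $I_t=\{p:m_p(d\boldsymbol{\epsilon})=t\}$ for $0\le t\le d$. For $\boldsymbol{\lambda}\in\mathcal{P}(l,n)$ put $C^p(\boldsymbol{\lambda})=\beta^{r_p}(\lambda^{(w^{-1}(p))})$ and $\mathbf{C}(\boldsymbol{\lambda})=(C^0,\dots,C^{l-1})$. For $1\le t\le d-1$ let $C_{[t]}$ be the multiset union $\biguplus_{p\in I_t}C^p$, and let $C_{[0]}=C_{[d]}$ be the multiset union $\biguplus_{p\in I_0}S^{-1}C^p\uplus\biguplus_{p\in I_d}C^p$. *)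

(* Defs.v *)
From HB Require Import structures.
From mathcomp Require Import all_boot all_order all_algebra.
From Stdlib Require Import ClassicalEpsilon.
Set Implicit Arguments. Unset Strict Implicit. Unset Printing Implicit Defensive.
Import Order.TTheory GRing.Theory Num.Theory.
Local Open Scope ring_scope.

(* Vectors of Q^l / Z^l are functions nat -> _, only the entries 0..l-1 matter;
   indices are taken mod l where the paper says "indices mod l". *)

Definition is_partition (s : seq nat) : bool :=
  sorted geq s && all (fun x => 0 < x)%N s.

(* lam k = lambda^(k) for k < l *)
Definition is_multipartition (l n : nat) (lam : nat -> seq nat) : Prop :=
  (forall k, (k < l)%N -> is_partition (lam k)) /\
  (\sum_(k < l) sumn (lam k))%N = n.

(* beta^r(lambda) = (lambda_i + r + 1 - i)_{i>=1}; index j = i - 1 *)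
Definition beta (r : int) (lam : seq nat) : nat -> int :=
  fun j => ((nth 0%N lam j)%:Z + r - j%:Z)%R.

Definition H0 (l : nat) (H : nat -> rat) : rat := (- \sum_(1 <= i < l) H i)%R.

Definition theta (l : nat) (H : nat -> rat) : nat -> rat :=
  fun k => if k == 0%N then (1 + H0 l H)%R else H k.

Definition alpha (l i : nat) : nat -> rat :=
  fun k => ((2%:R * (k == i)%:R - (k == (i + l - 1) %% l)%N%:R
            - (k == (i + 1) %% l)%N%:R) : rat)%R.

Definition sact (l i : nat) (th : nat -> rat) : nat -> rat :=
  fun k => (th k - th i * alpha l i k)%R.

(* an element w of S_l, given as a word [:: i1; ...; ik] meaning s_i1 ... s_ik *)
Definition wact (l : nat) (ws : seq nat) (th : nat -> rat) : nat -> rat :=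
  foldr (sact l) th ws.

Definition transp (i k : nat) : nat :=
  if k == i.-1 then i else if k == i then i.-1 else k.

Definition wperm (ws : seq nat) : nat -> nat :=
  foldr (fun i f => fun k => transp i (f k)) id ws.

Definition wperm_inv (ws : seq nat) : nat -> nat := wperm (rev ws).

Definition phi (l : nat) (r : nat -> int) : nat -> int :=
  fun j => (r ((j + l - 1) %% l)%N - r j)%R.

(* epsilon = w_theta . theta = phi(r) + w . theta *)
Definition eps (l : nat) (H : nat -> rat) (r : nat -> int) (ws : seq nat) : nat -> rat :=
  fun j => ((phi l r j)%:~R + wact l ws (theta l H) j)%R.

Definition mdeps (l d : nat) (H : nat -> rat) (r : nat -> int) (ws : seq nat) (p : nat) : rat :=
  (\sum_(i < p.+1) d%:R * eps l H r ws i)%R.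

Definition inI (l d : nat) (H : nat -> rat) (r : nat -> int) (ws : seq nat) (t p : nat) : bool :=
  mdeps l d H r ws p == (t%:R : rat).

Definition strictly_decreasing (C : nat -> int) : Prop := forall i, (C i.+1 < C i)%R.

Definition memC (C : nat -> int) (x : int) : Prop := exists i, C i = x.

(* multiplicity 0/1 of x in a strictly decreasing sequence (classical test) *)
Definition ind (P : Prop) : nat := if excluded_middle_informative P then 1%N else 0%N.

Definition shiftS (i : int) (C : nat -> int) : nat -> int := fun j => (C j + i)%R.

(* multiplicity of x in C_[t] built from the family Cf (Cf p = C^p):
   for 1 <= t <= d-1 : multiset union of C^p, p in I_t;
   for t = 0 or t = d: union of S^{-1} C^p (p in I_0) and C^p (p in I_d). *)
Definition bracket (l d : nat) (H : nat -> rat) (r : nat -> int) (ws : seq nat)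
  (Cf : nat -> nat -> int) (t : nat) (x : int) : nat :=
  if (t == 0%N) || (t == d) then
    (\sum_(p < l | inI l d H r ws 0 p) ind (memC (shiftS (-1) (Cf p)) x)
     + \sum_(p < l | inI l d H r ws d p) ind (memC (Cf p) x))%N
  else
    (\sum_(p < l | inI l d H r ws t p) ind (memC (Cf p) x))%N.

Definition Clam (r : nat -> int) (ws : seq nat) (lam : nat -> seq nat) : nat -> nat -> int :=
  fun p => beta (r p) (lam (wperm_inv ws p)).

Definition good_tuple (l d : nat) (H : nat -> rat) (r : nat -> int) (ws : seq nat)
  (lam : nat -> seq nat) (Ct : nat -> nat -> int) : Prop :=
  (forall p, (p < l)%N -> strictly_decreasing (Ct p)) /\
  (forall t, (t <= d)%N -> forall x,
      bracket l d H r ws Ct t x = bracket l d H r ws (Clam r ws lam) t x) /\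
  (forall p, (0 < p < l)%N -> eps l H r ws p = 0%R ->
      forall x, memC (Ct p) x -> memC (Ct p.-1) x) /\
  (inI l d H r ws 0 0 ->
      forall x, memC (shiftS (-1) (Ct 0%N)) x -> memC (Ct l.-1) x).

(* Main.v *)
Require Import Defs.
From HB Require Import structures.
From mathcomp Require Import all_boot all_order all_algebra.
From Stdlib Require Import ClassicalEpsilon.
Set Implicit Arguments. Unset Strict Implicit.
Import Order.TTheory GRing.Theory Num.Theory.
Local Open Scope ring_scope.

Lemma sum_eq_nat (l a : nat) : (a < l)%N ->
  \sum_(k < l) (((k : nat) == a)%:R : rat) = 1.
Proof.
move=> al; rewrite (bigD1 (Ordinal al)) //= eqxx big1 ?addr0 // => k /negbTE.
by move=> H; rewrite -(inj_eq val_inj) /= in H; rewrite H.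
Qed.

Lemma sum_alpha (l i : nat) : (i < l)%N -> \sum_(k < l) alpha l i k = 0.
Proof.
move=> il; rewrite /alpha !sumrB -mulr_sumr !sum_eq_nat //.
- by rewrite ltn_pmod // (leq_ltn_trans (leq0n i) il).
- by rewrite ltn_pmod // (leq_ltn_trans (leq0n i) il).
Qed.

Lemma sum_wact (l : nat) (ws : seq nat) (th : nat -> rat) :
  all (fun i => 0 < i < l)%N ws ->
  \sum_(k < l) wact l ws th k = \sum_(k < l) th k.
Proof.
elim: ws => //= i ws IH /andP [/andP [_ il] Hws].
rewrite /sact sumrB -mulr_sumr sum_alpha // mulr0 subr0.
exact: IH.
Qed.

Lemma sum_theta (l : nat) (H : nat -> rat) : (0 < l)%N ->
  \sum_(k < l) theta l H k = 1.
Proof.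
case: l => // l _; rewrite big_ord_recl /theta /= /H0.
rewrite big_add1 /= big_mkord.
by rewrite -addrA addNr addr0.
Qed.

Lemma sum_phi (l : nat) (r : nat -> int) : (0 < l)%N -> \sum_(j < l) phi l r j = 0.
Proof.
case: l => // l _; rewrite /phi sumrB big_ord_recl [X in _ - X]big_ord_recr /=.
have -> : \sum_(i < l) r ((bump 0 i + l.+1 - 1) %% l.+1)%N = \sum_(i < l) r i.
  apply: eq_bigr => i _; congr r.
  rewrite /bump /= add1n addSn subn1 /= modnDr modn_small //.
  exact: (leq_trans (ltn_ord i) (leqnSn l)).
have -> : ((0 + l.+1 - 1) %% l.+1)%N = l by rewrite subn1 /= modn_small.
by rewrite addrC subrr.
Qed.

Lemma sum_eps (l : nat) (H : nat -> rat) (r : nat -> int) (ws : seq nat) :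
  (0 < l)%N -> all (fun i => 0 < i < l)%N ws ->
  \sum_(j < l) eps l H r ws j = 1.
Proof.
move=> l0 Hws; rewrite /eps big_split /= sum_wact // sum_theta //.
by rewrite -rmorph_sum sum_phi // add0r.
Qed.

Definition dint (l d : nat) (th : nat -> rat) :=
  forall k, (k < l)%N -> d%:R * th k \is a Num.int.

Lemma dint_wact (l d : nat) (ws : seq nat) (th : nat -> rat) :
  all (fun i => 0 < i < l)%N ws -> dint l d th -> dint l d (wact l ws th).
Proof.
move=> + Hth; elim: ws => //= i ws IH /andP [/andP [_ il] Hws] k kl.
have IH' := IH Hws.
rewrite /sact mulrBr mulrA rpredB ?IH' // rpredM ?IH' //.
by rewrite /alpha !rpredB ?rpredM ?natr_int.
Qed.

Lemma dint_theta (l d : nat) (H : nat -> rat) :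
  (forall i, (0 < i < l)%N -> exists z : int, (d%:R * H i)%R = z%:~R) ->
  dint l d (theta l H).
Proof.
move=> Hz [|k] kl; rewrite /theta /=.
  rewrite /H0 mulrDr mulr1 mulrN mulr_sumr rpredD ?natr_int // rpredN.
  rewrite big_nat rpred_sum // => i /andP [i0 il].
  by have [z ->] := Hz i (introT andP (conj i0 il)); exact: intr_int.
have [z ->] := Hz k.+1 (introT andP (conj (ltn0Sn k) kl)); exact: intr_int.
Qed.

Definition Hyp (l d : nat) (H : nat -> rat) (r : nat -> int) (ws : seq nat) : Prop :=
  [/\ (0 < l)%N, (0 < d)%N,
   (forall i, (0 < i < l)%N -> exists z : int, (d%:R * H i)%R = z%:~R),
   all (fun i => 0 < i < l)%N ws &
   (forall j, (j < l)%N -> (0 <= eps l H r ws j <= 1)%R)].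

Section M.
Lemma mS (l d : nat) H r ws p :
  mdeps l d H r ws p.+1 = mdeps l d H r ws p + d%:R * eps l H r ws p.+1.
Proof. by rewrite /mdeps big_ord_recr. Qed.
End M.

Lemma m_int l d H r ws p : Hyp l d H r ws -> (p < l)%N -> mdeps l d H r ws p \is a Num.int.
Proof.
case=> l0 d0 Hz Hws He pl; rewrite /mdeps rpred_sum // => i _.
have il : (i < l)%N by apply: leq_ltn_trans pl; rewrite -ltnS.
have := dint_wact Hws (dint_theta Hz) il.
by rewrite /eps mulrDr => Hw; rewrite rpredD // rpredM ?natr_int ?intr_int.
Qed.

Lemma m_ge0 l d H r ws p : Hyp l d H r ws -> (p < l)%N -> 0 <= mdeps l d H r ws p.
Proof.
case=> l0 d0 Hz Hws He pl; rewrite /mdeps sumr_ge0 // => i _.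
have il : (i < l)%N by apply: leq_ltn_trans pl; rewrite -ltnS.
by rewrite mulr_ge0 // ; case/andP: (He i il).
Qed.

Lemma m_mono l d H r ws a b : Hyp l d H r ws -> (a <= b)%N -> (b < l)%N ->
  mdeps l d H r ws a <= mdeps l d H r ws b.
Proof.
move=> Hy ab bl; elim: b ab bl => [|b IH]; first by rewrite leqn0 => /eqP ->.
rewrite leq_eqVlt => /orP [/eqP -> //|]; rewrite ltnS => ab bl.
rewrite mS (le_trans (IH ab (ltnW bl))) // lerDl mulr_ge0 //.
by case: Hy => _ _ _ _ He; case/andP: (He _ bl).
Qed.

Lemma m_last l d H r ws : Hyp l d H r ws -> mdeps l d H r ws l.-1 = d%:R.
Proof.
case=> l0 d0 Hz Hws He; rewrite /mdeps prednK // -mulr_sumr sum_eps // mulr1 //.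
Qed.

Lemma m_le l d H r ws p : Hyp l d H r ws -> (p < l)%N -> mdeps l d H r ws p <= d%:R.
Proof.
move=> Hy pl; rewrite -(m_last Hy) m_mono //; first by rewrite -ltnS prednK //; case: Hy.
by rewrite prednK //; case: Hy.
Qed.

Lemma m_range l d H r ws p : Hyp l d H r ws -> (p < l)%N ->
  exists2 t, (t <= d)%N & inI l d H r ws t p.
Proof.
move=> Hy pl; have := m_int Hy pl; rewrite intrEge0 ?m_ge0 //.
case/natrP => t Et; exists t; last by rewrite /inI Et.
by rewrite -(ler_nat rat) -Et m_le.
Qed.

Lemma inI_uniq l d H r ws a b p : inI l d H r ws a p -> inI l d H r ws b p -> a = b.
Proof. by rewrite /inI => /eqP -> /eqP /eqP; rewrite eqr_nat => /eqP. Qed.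

Lemma inI_interval l d H r ws t a b c : Hyp l d H r ws -> (a <= c)%N -> (c <= b)%N -> (b < l)%N ->
  inI l d H r ws t a -> inI l d H r ws t b -> inI l d H r ws t c.
Proof.
move=> Hy ac cb bl /eqP Ea /eqP Eb; rewrite /inI eq_le.
have cl : (c < l)%N by apply: leq_ltn_trans bl.
by rewrite -{1}Eb -Ea !m_mono // (leq_trans ac cb).
Qed.

Lemma eps_zero l d H r ws t c : Hyp l d H r ws -> (0 < c < l)%N ->
  inI l d H r ws t c.-1 -> inI l d H r ws t c -> eps l H r ws c = 0.
Proof.
move=> Hy /andP [c0 cl] /eqP E1 /eqP E2.
have := mS l d H r ws c.-1; rewrite prednK // E1 E2.
rewrite -[X in X = _]addr0 => /addrI /esym /eqP; rewrite mulf_eq0 pnatr_eq0 => /orP [/eqP d0|/eqP //].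
by case: Hy; rewrite d0.
Qed.

Lemma eps_zero_inI l d H r ws t c : (0 < c)%N -> eps l H r ws c = 0 ->
  inI l d H r ws t c.-1 = inI l d H r ws t c.
Proof.
by move=> c0 E; rewrite /inI -{2}(prednK c0) mS prednK // E mulr0 addr0.
Qed.

Lemma inI_last l d H r ws : Hyp l d H r ws -> inI l d H r ws d l.-1.
Proof. by move=> Hy; rewrite /inI m_last. Qed.

Lemma inI0_0 l d H r ws p : Hyp l d H r ws -> (p < l)%N -> inI l d H r ws 0 p -> inI l d H r ws 0 0.
Proof.
move=> Hy pl /eqP E; rewrite /inI eq_le m_ge0 ?andbT //; last exact: leq_ltn_trans pl.
by rewrite -E m_mono.
Qed.

Lemma ind_bool (b : bool) : ind b = b.
Proof. by rewrite /ind; case: excluded_middle_informative; case: b. Qed.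

Lemma ind_le1 P : (ind P <= 1)%N.
Proof. by rewrite /ind; case: excluded_middle_informative. Qed.

Lemma ind_T (P : Prop) : P -> ind P = 1%N.
Proof. by rewrite /ind; case: excluded_middle_informative. Qed.

Lemma ind_F (P : Prop) : ~ P -> ind P = 0%N.
Proof. by rewrite /ind; case: excluded_middle_informative. Qed.

Lemma sum_lt_min (n m : nat) : (\sum_(i < n) (i < m)%N : nat)%N = minn m n.
Proof.
elim: n => [|n IH]; first by rewrite big_ord0 minn0.
rewrite big_ord_recr /= IH.
case: (ltnP n m) => nm.
  by rewrite addn1 (minn_idPr nm).
by rewrite addn0 (minn_idPl (leq_trans nm (leqnSn n))).
Qed.

Lemma sum_all_ind n (Q : nat -> Prop) : (forall i, (i < n)%N -> Q i) ->
  (\sum_(i < n) ind (Q i))%N = n.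
Proof.
move=> HQ; rewrite (eq_bigr (fun _ => 1%N)) ?sum1_card ?card_ord // => i _.
exact: ind_T (HQ i (ltn_ord i)).
Qed.

Lemma sum_ind_le n (Q : nat -> Prop) : (\sum_(i < n) ind (Q i) <= n)%N.
Proof.
rewrite -[X in (_ <= X)%N]card_ord -sum1_card leq_sum // => i _; exact: ind_le1.
Qed.

Lemma antitone_count n (Q : nat -> Prop) :
  (forall i j, (i <= j)%N -> (j < n)%N -> Q j -> Q i) ->
  forall k, (k < n)%N -> ((k < \sum_(i < n) ind (Q i))%N <-> Q k).
Proof.
elim: n => [|n IH] Hant k //; rewrite ltnS big_ord_recr /= => kn.
have Hant' : forall i j, (i <= j)%N -> (j < n)%N -> Q j -> Q i.
  by move=> i j ij jn; apply: Hant ij (ltnW jn).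
case: (classic (Q n)) => Qn.
  rewrite (ind_T Qn) addn1 sum_all_ind; last first.
    by move=> i il; apply: Hant Qn => //; exact: ltnW.
  by rewrite ltnS kn; split=> // _; apply: Hant Qn.
rewrite (ind_F Qn) addn0.
move: kn; rewrite leq_eqVlt => /orP [/eqP ->|kn]; last exact: IH.
split=> // h; exfalso; move: h; rewrite ltnNge sum_ind_le.
by [].
Qed.

Lemma sd_lt (C : nat -> int) : strictly_decreasing C -> forall i j, (i < j)%N -> C j < C i.
Proof.
move=> HC i; elim=> // j IH; rewrite ltnS leq_eqVlt => /orP [/eqP ->|/IH h].
  exact: HC.
exact: lt_trans (HC j) h.
Qed.

Lemma sd_inj (C : nat -> int) : strictly_decreasing C -> forall i j, C i = C j -> i = j.
Proof.
move=> HC i j E; case: (ltngtP i j) => // h.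
- by have := sd_lt HC h; rewrite E ltxx.
- by have := sd_lt HC h; rewrite E ltxx.
Qed.

Lemma sd_ext (C C' : nat -> int) : strictly_decreasing C -> strictly_decreasing C' ->
  (forall x, memC C x <-> memC C' x) -> forall i, C i = C' i.
Proof.
move=> HC HC' E; elim/ltn_ind => i IH.
have [j Ej] : memC C' (C i) by apply/E; exists i.
case: (ltngtP i j) => h; last by rewrite -Ej h.
- have [k Ek] : memC C (C' i) by apply/E; exists i.
  have : C i < C k by rewrite Ek -Ej; exact: sd_lt.
  case: (ltnP k i) => ki; last first.
    move: ki; rewrite leq_eqVlt => /orP [/eqP ->|ik]; first by rewrite ltxx.
    by move/(lt_trans (sd_lt HC ik)); rewrite ltxx.
  move=> _; have := IH k ki; rewrite Ek => /(sd_inj HC') ik.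
  by move: ki; rewrite ik ltnn.
- have := IH j h; rewrite Ej => /(sd_inj HC) ji.
  by move: h; rewrite ji ltnn.
Qed.

Definition pb (P : Prop) : bool := if excluded_middle_informative P then true else false.
Lemma pbP (P : Prop) : reflect P (pb P).
Proof. by rewrite /pb; case: excluded_middle_informative => h; constructor. Qed.

Lemma nth_le_sumn (s : seq nat) j : (nth 0 s j <= sumn s)%N.
Proof.
elim: s j => [|a s IH] [|j] //=; first exact: leq_addr.
exact: leq_trans (IH j) (leq_addl _ _).
Qed.

Lemma beta_low (R : int) (s : seq nat) (z : int) : z <= R - (size s)%:Z -> memC (beta R s) z.
Proof.
move=> hz; have h0 : 0 <= R - z.
  by rewrite subr_ge0 (le_trans hz) // lerBlDr lerDl.
exists `|R - z|%N; rewrite /beta gez0_abs // nth_default; last first.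
  by rewrite -lez_nat gez0_abs // lerBrDl -lerBrDr.
by rewrite add0r opprB addrC subrK.
Qed.

Lemma beta_up (R : int) (s : seq nat) (z : int) : memC (beta R s) z -> z <= (sumn s)%:Z + R.
Proof.
case=> j <-; rewrite /beta; apply: (le_trans (y := (nth 0%N s j)%:Z + R)).
  by rewrite lerBlDr lerDl.
by rewrite lerD2r lez_nat nth_le_sumn.
Qed.

Lemma enum_ex (P : int -> Prop) : exists C : nat -> int, forall N M : int,
  (forall x, x <= N -> P x) -> (forall x, P x -> x <= M) ->
  strictly_decreasing C /\ (forall x, memC C x <-> P x).
Proof.
case: (classic (exists N M : int, (forall x, x <= N -> P x) /\ (forall x, P x -> x <= M)))
  => [[N [M [HN HM]]]|no]; last first.
  by exists (fun=> 0) => N M h1 h2; exfalso; apply: no; exists N, M.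
have NM : N <= M by apply: HM; apply: HN.
pose K := `|M - N|%N.
have KE : (K%:Z = M - N) by rewrite /K gez0_abs // subr_ge0.
pose Ls := [seq M - i%:Z | i <- iota 0 K].
pose F := [seq x <- Ls | pb (P x)].
have memLs : forall x, x \in Ls -> N < x.
  move=> x /mapP [i]; rewrite mem_iota add0n => /andP [_ iK] ->.
  by rewrite ltrBrDl -ltrBrDr -KE ltz_nat.
have sLs : sorted (fun a b : int => b < a) Ls.
  rewrite sorted_map; apply: sub_sorted (iota_ltn_sorted 0 K) => i j ij /=.
  by rewrite ltrD2l ltrN2 ltz_nat.
have sF : sorted (fun a b : int => b < a) F.
  by apply: sorted_filter => // a b c ba cb; exact: lt_trans cb ba.
exists (fun i => if (i < size F)%N then nth 0 F i else N - (i - size F)%N%:Z).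
move=> _ _ _ _; split.
  move=> i /=; case: ifP => h1; case: ifP => h2.
  - apply: (sorted_ltn_nth (leT := fun a b : int => b < a)) => //.
    by move=> a b c ba cb; exact: lt_trans cb ba.
  - by move: h2; rewrite (ltnW h1).
  - have -> : (i.+1 - size F = 0)%N by apply/eqP; rewrite subn_eq0.
    have : F`_i \in Ls by apply: (mem_subseq (filter_subseq _ _)); exact: mem_nth.
    by move/memLs; rewrite subr0.
  - rewrite subSn; last by rewrite leqNgt h2.
    rewrite -addn1 PoszD opprD addrA.
    by rewrite ltrBlDr ltrDl.
move=> x; split.
  case=> i; case: ifP => h <-.
    have : nth 0 F i \in F by exact: mem_nth.
    by rewrite mem_filter => /andP [/pbP].
  by apply: HN; rewrite lerBlDr lerDl.
move=> Px; case: (lerP x N) => xN.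
  exists (size F + `|N - x|%N)%N; rewrite ltnNge leq_addr /= addKn gez0_abs ?subr_ge0 //.
  by rewrite opprB addrC subrK.
have xF : x \in F.
  rewrite mem_filter; apply/andP; split; first by apply/pbP.
  apply/mapP; exists `|M - x|%N; last by rewrite gez0_abs ?subr_ge0 ?HM // opprB addrC subrK.
  rewrite mem_iota add0n /= -ltz_nat gez0_abs ?subr_ge0 ?HM // KE.
  by rewrite ltrD2l ltrN2.
by exists (index x F); rewrite index_mem xF nth_index.
Qed.

Definition enumC (P : int -> Prop) : nat -> int :=
  proj1_sig (constructive_indefinite_description _ (enum_ex P)).

Lemma enumC_spec (P : int -> Prop) (N M : int) :
  (forall x, x <= N -> P x) -> (forall x, P x -> x <= M) ->
  strictly_decreasing (enumC P) /\ (forall x, memC (enumC P) x <-> P x).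
Proof. rewrite /enumC; case: constructive_indefinite_description => C HC /=; exact: HC. Qed.

Definition fil l d H r ws t : seq nat := [seq p <- iota 0 l | inI l d H r ws t p].

Definition chainT l d H r ws t : seq nat :=
  if (t == 0%N) || (t == d) then fil l d H r ws d ++ fil l d H r ws 0
  else fil l d H r ws t.

Definition Dset l d H r ws (Cf : nat -> nat -> int) p : nat -> int :=
  if inI l d H r ws 0 p then shiftS (-1) (Cf p) else Cf p.

Lemma memC_shift C y : memC (shiftS (-1) C) y <-> memC C (y + 1).
Proof.
rewrite /memC /shiftS; split=> [[i <-]|[i Ei]]; exists i; first by rewrite subrK.
by rewrite Ei addrK.
Qed.

Lemma memC_Dset l d H r ws Cf p x :
  memC (Dset l d H r ws Cf p) (if inI l d H r ws 0 p then x - 1 else x) <-> memC (Cf p) x.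
Proof. by rewrite /Dset; case: ifP => _ //; rewrite memC_shift subrK. Qed.

Lemma sum_ord_filter l (P : pred nat) (F : nat -> nat) :
  (\sum_(p < l | P p) F p)%N = (\sum_(p <- [seq p <- iota 0 l | P p]) F p)%N.
Proof. by rewrite big_filter -(big_mkord P F) /index_iota subn0. Qed.

Lemma inI_0d l d H r ws p : (0 < d)%N -> inI l d H r ws d p -> inI l d H r ws 0 p -> False.
Proof. by move=> d0 h1 h2; have := inI_uniq h1 h2 => E; rewrite E in d0. Qed.

Lemma bracket_chain l d H r ws Cf t x : (0 < d)%N ->
  bracket l d H r ws Cf t x = (\sum_(p <- chainT l d H r ws t) ind (memC (Dset l d H r ws Cf p) x))%N.
Proof.
move=> d0; rewrite /bracket /chainT; case: ifP => Ht.
  rewrite big_cat addnC (sum_ord_filter l (inI l d H r ws 0) (fun p => ind (memC (shiftS (-1) (Cf p)) x))).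
  rewrite (sum_ord_filter l (inI l d H r ws d) (fun p => ind (memC (Cf p) x))).
  rewrite /fil; congr addn; rewrite !big_filter;
    apply: eq_bigr => p Hp; rewrite /Dset.
    by case: ifP => // h; exfalso; exact: inI_0d d0 Hp h.
  by rewrite Hp.
rewrite (sum_ord_filter l (inI l d H r ws t) (fun p => ind (memC (Cf p) x))).
rewrite /fil !big_filter; apply: eq_bigr => p Hp; rewrite /Dset.
case: ifP => // h; have E := inI_uniq Hp h.
by rewrite E eqxx in Ht.
Qed.

Lemma mem_fil l d H r ws t p : (p \in fil l d H r ws t) = (p < l)%N && inI l d H r ws t p.
Proof. by rewrite /fil mem_filter mem_iota add0n andbC. Qed.

Lemma mem_chain l d H r ws a p : (p < l)%N -> inI l d H r ws a p -> p \in chainT l d H r ws a.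
Proof.
move=> pl h; rewrite /chainT; case: ifP => ha; last by rewrite mem_fil pl h.
rewrite mem_cat !mem_fil pl /=; case/orP: ha => /eqP E; subst a; by rewrite h ?orbT.
Qed.

Lemma chain_lt l d H r ws t p : p \in chainT l d H r ws t -> (p < l)%N.
Proof.
rewrite /chainT; case: ifP => _; last by rewrite mem_fil => /andP [].
by rewrite mem_cat !mem_fil => /orP [] /andP [].
Qed.

Lemma chain_same l d H r ws a t p : inI l d H r ws a p -> p \in chainT l d H r ws t ->
  chainT l d H r ws a = chainT l d H r ws t /\
  (forall Cf x, bracket l d H r ws Cf a x = bracket l d H r ws Cf t x).
Proof.
move=> ha hp.
have [E|[Ha Ht]] : a = t \/ (((a == 0) || (a == d)) /\ ((t == 0) || (t == d))).
  move: hp; rewrite /chainT; case: ifP => Ht.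
    rewrite mem_cat !mem_fil => /orP [] /andP [_ h]; right; split => //;
    by rewrite (inI_uniq ha h) eqxx ?orbT.
  by rewrite mem_fil => /andP [_ h]; left; exact: inI_uniq ha h.
  by rewrite E; split.
by split; [rewrite /chainT Ha Ht | move=> Cf x; rewrite /bracket Ha Ht].
Qed.

Lemma uniq_fil l d H r ws t : uniq (fil l d H r ws t).
Proof. exact/filter_uniq/iota_uniq. Qed.

Lemma uniq_chain l d H r ws t : (0 < d)%N -> uniq (chainT l d H r ws t).
Proof.
move=> d0; rewrite /chainT; case: ifP => _; last exact: uniq_fil.
rewrite cat_uniq !uniq_fil /= andbT; apply/hasPn => p.
rewrite !mem_fil => /andP [_ h0]; apply/negP => /andP [_ hd].
exact: inI_0d d0 hd h0.
Qed.

Lemma sorted_fil l d H r ws t : sorted leq (fil l d H r ws t).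
Proof. by apply: sorted_filter; [exact: leq_trans|exact: iota_sorted]. Qed.

Lemma sorted_fil_ltn l d H r ws t : sorted ltn (fil l d H r ws t).
Proof. by apply: sorted_filter; [exact: ltn_trans|exact: iota_ltn_sorted]. Qed.

Lemma index_sorted (s : seq nat) x y : sorted ltn s -> x \in s -> y \in s -> (x <= y)%N ->
  (index x s <= index y s)%N.
Proof.
move=> ss xs ys xy; rewrite leqNgt; apply/negP => h.
have := sorted_ltn_nth ltn_trans 0%N ss; move=> /(_ (index y s) (index x s)).
rewrite !inE !index_mem xs ys !nth_index // => /(_ isT isT h).
by rewrite ltnNge xy.
Qed.

Lemma int_bound (R : int) (a b B : nat) : (`|R|%N + a + b <= B)%N ->
  -(B%:Z) <= R - a%:Z /\ b%:Z + R <= B%:Z.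
Proof.
move=> hB; have : (`|R| + a%:Z + b%:Z <= B%:Z) by rewrite -abszE -!PoszD lez_nat.
move=> hB'; have := lexx `|R|; rewrite ler_norml => /andP [h1 h2]; split.
  apply: (le_trans (y := - (`|R| + a%:Z))).
    by rewrite lerN2 (le_trans _ hB') // lerDl.
  by rewrite opprD lerD2r.
apply: (le_trans _ hB'); rewrite [X in _ <= X]addrC lerD2l (le_trans h2) // lerDl.
exact: le0z_nat.
Qed.

Lemma sum_ind_seq_le (s : seq nat) (F : nat -> Prop) : (\sum_(q <- s) ind (F q) <= size s)%N.
Proof.
elim: s => [|a s IH]; first by rewrite big_nil.
by rewrite big_cons /= -add1n leq_add // ind_le1.
Qed.

Lemma sum_seq_ord (s : seq nat) (F : nat -> nat) :
  (\sum_(q <- s) F q)%N = (\sum_(i < size s) F (nth 0%N s i))%N.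
Proof. by rewrite (big_nth 0%N) big_mkord. Qed.

Lemma bracket_0d l d H r ws Cf x : bracket l d H r ws Cf d x = bracket l d H r ws Cf 0 x.
Proof. by rewrite /bracket eqxx orbT. Qed.

Lemma chainT_0d l d H r ws : chainT l d H r ws d = chainT l d H r ws 0.
Proof. by rewrite /chainT eqxx orbT. Qed.

Lemma Dset_F l d H r ws Cf p : ~~ inI l d H r ws 0 p -> Dset l d H r ws Cf p = Cf p.
Proof. by rewrite /Dset => /negbTE ->. Qed.

Lemma Dset_T l d H r ws Cf p : inI l d H r ws 0 p -> Dset l d H r ws Cf p = shiftS (-1) (Cf p).
Proof. by rewrite /Dset => ->. Qed.

Lemma CL l d H r ws lam Ct t a b : Hyp l d H r ws -> good_tuple l d H r ws lam Ct ->
  (a <= b)%N -> (b < l)%N -> inI l d H r ws t a -> inI l d H r ws t b ->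
  forall x, memC (Ct b) x -> memC (Ct a) x.
Proof.
move=> Hy [_ [_ [Hiii _]]]; elim: b => [|b IH] ab bl ha hb x.
  by move: ab; rewrite leqn0 => /eqP ->.
move: ab; rewrite leq_eqVlt => /orP [/eqP -> //|]; rewrite ltnS => ab.
have hb' : inI l d H r ws t b by apply: (inI_interval Hy ab (leqnSn b) bl).
have e0 : eps l H r ws b.+1 = 0 := eps_zero Hy (introT andP (conj (ltn0Sn b) bl)) hb' hb.
move=> /(Hiii b.+1 (introT andP (conj (ltn0Sn b) bl)) e0) /= hx.
exact: IH ab (ltnW bl) ha hb' x hx.
Qed.

Lemma nest l d H r ws lam Ct t : Hyp l d H r ws -> good_tuple l d H r ws lam Ct ->
  forall i j y, (i <= j)%N -> (j < size (chainT l d H r ws t))%N ->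
  memC (Dset l d H r ws Ct (nth 0%N (chainT l d H r ws t) j)) y ->
  memC (Dset l d H r ws Ct (nth 0%N (chainT l d H r ws t) i)) y.
Proof.
move=> Hy Hg i j y ij; have d0 : (0 < d)%N by case: Hy.
have l0 : (0 < l)%N by case: Hy.
have srt := sorted_fil l d H r ws.
rewrite /chainT; case: ifP => Ht; last first.
  move=> js; have is_ : (i < size (fil l d H r ws t))%N by exact: leq_ltn_trans js.
  have := mem_nth 0%N js; have := mem_nth 0%N is_; rewrite !mem_fil.
  move=> /andP [al ha] /andP [bl hb].
  have nz : forall q, inI l d H r ws t q -> ~~ inI l d H r ws 0 q.
    move=> q hq; apply/negP => h0; have E := inI_uniq hq h0.
    by rewrite E eqxx in Ht.
  rewrite !Dset_F ?nz //; apply: (CL Hy Hg _ bl ha hb).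
  by apply: (sorted_leq_nth leq_trans leqnn 0%N (srt t)); rewrite ?inE.
rewrite size_cat !nth_cat => js.
set A := fil l d H r ws d; set B := fil l d H r ws 0.
have nA : forall q, q \in A -> ~~ inI l d H r ws 0 q.
  by move=> q; rewrite mem_fil => /andP [_ hq]; apply/negP; exact: inI_0d d0 hq.
case: (ltnP j (size A)) => jA.
  have iA : (i < size A)%N by exact: leq_ltn_trans jA.
  rewrite (leq_ltn_trans ij jA) !Dset_F ?nA ?mem_nth //.
  have := mem_nth 0%N jA; have := mem_nth 0%N iA; rewrite !mem_fil.
  move=> /andP [al ha] /andP [bl hb].
  apply: (CL Hy Hg _ bl ha hb).
  by apply: (sorted_leq_nth leq_trans leqnn 0%N (srt d)); rewrite ?inE.
have jB : (j - size A < size B)%N by rewrite ltn_subLR.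
have := mem_nth 0%N jB; rewrite mem_fil => /andP [bl hb].
rewrite Dset_T // memC_shift => hx.
case: (ltnP i (size A)) => iA.
  have := mem_nth 0%N iA; rewrite mem_fil => /andP [al ha].
  rewrite Dset_F ?nA ?mem_nth //.
  have h00 := inI0_0 Hy bl hb.
  have hx0 := CL Hy Hg (leq0n _) bl h00 hb hx.
  have [_ [_ [_ Hiv]]] := Hg.
  have hl := Hiv h00 y (proj2 (memC_shift _ _) hx0).
  have ll : (l.-1 < l)%N by rewrite prednK.
  apply: (CL Hy Hg _ ll ha (inI_last Hy)) hl.
  by rewrite -ltnS prednK.
have iB : (i - size A < size B)%N by apply: leq_ltn_trans jB; exact: leq_sub2r.
have := mem_nth 0%N iB; rewrite mem_fil => /andP [al ha].
rewrite Dset_T // memC_shift.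
apply: (CL Hy Hg _ bl ha hb) hx.
by apply: (sorted_leq_nth leq_trans leqnn 0%N (srt 0%N)); rewrite ?inE // leq_sub2r.
Qed.

Lemma idx_mono l d H r ws t p q : (0 < d)%N ->
  p \in chainT l d H r ws t -> q \in chainT l d H r ws t -> (q <= p)%N ->
  inI l d H r ws 0 q = inI l d H r ws 0 p ->
  (index q (chainT l d H r ws t) <= index p (chainT l d H r ws t))%N.
Proof.
move=> d0; have srt := sorted_fil_ltn l d H r ws.
rewrite /chainT; case: ifP => Ht; last by move=> hp hq qp _; exact: index_sorted.
rewrite !mem_cat !index_cat => hp hq qp E.
have nA : forall z, z \in fil l d H r ws d -> ~~ inI l d H r ws 0 z.
  by move=> z; rewrite mem_fil => /andP [_ hz]; apply/negP; exact: inI_0d d0 hz.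
have nB : forall z, z \in fil l d H r ws 0 -> inI l d H r ws 0 z.
  by move=> z; rewrite mem_fil => /andP [].
case: (boolP (p \in fil l d H r ws d)) => pA; case: (boolP (q \in fil l d H r ws d)) => qA.
- exact: index_sorted.
- have hq' : q \in fil l d H r ws 0 by move: hq; rewrite (negbTE qA).
  by have := nA p pA; rewrite -E (nB q hq').
- have hp' : p \in fil l d H r ws 0 by move: hp; rewrite (negbTE pA).
  by have := nA q qA; rewrite E (nB p hp').
- have hp' : p \in fil l d H r ws 0 by move: hp; rewrite (negbTE pA).
  have hq' : q \in fil l d H r ws 0 by move: hq; rewrite (negbTE qA).
  by rewrite leq_add2l; apply: index_sorted.
Qed.

Definition tt l d H r ws p : nat := find (fun t => inI l d H r ws t p) (iota 0 d.+1).

Lemma tt_spec l d H r ws p : Hyp l d H r ws -> (p < l)%N ->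
  (tt l d H r ws p <= d)%N /\ inI l d H r ws (tt l d H r ws p) p.
Proof.
move=> Hy pl; have [t td ht] := m_range Hy pl.
have hs : has (fun t => inI l d H r ws t p) (iota 0 d.+1).
  by apply/hasP; exists t => //; rewrite mem_iota add0n ltnS td.
have hf := hs; rewrite has_find size_iota in hf.
have := nth_find 0%N hs; rewrite nth_iota // add0n => h; split => //.
Qed.

Definition mult l d H r ws lam t y := bracket l d H r ws (Clam r ws lam) t y.
Definition kk l d H r ws p := index p (chainT l d H r ws (tt l d H r ws p)).
Definition Pset l d H r ws lam p (x : int) : Prop :=
  (kk l d H r ws p < mult l d H r ws lam (tt l d H r ws p)
     (if inI l d H r ws 0 p then (x - 1)%R else x))%N.
Definition Ctc l d H r ws lam : nat -> nat -> int := fun p => enumC (Pset l d H r ws lam p).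
Definition Bnd l (r : nat -> int) ws (lam : nat -> seq nat) : nat :=
  (\max_(q < l) (`|r q|%N + size (lam (wperm_inv ws q)) + sumn (lam (wperm_inv ws q))))%N.

Lemma Bnd_spec l r ws lam q : (q < l)%N ->
  -((Bnd l r ws lam)%:Z) <= r q - (size (lam (wperm_inv ws q)))%:Z /\
  (sumn (lam (wperm_inv ws q)))%:Z + r q <= (Bnd l r ws lam)%:Z.
Proof.
move=> ql; apply: int_bound.
by rewrite /Bnd (bigD1 (Ordinal ql)) //= leq_maxl.
Qed.

Lemma Dclam_low l d H r ws lam q y : (q < l)%N -> y <= -((Bnd l r ws lam)%:Z) - 1 ->
  memC (Dset l d H r ws (Clam r ws lam) q) y.
Proof.
move=> ql hy; have [h1 _] := Bnd_spec r ws lam ql.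
have hy1 : y + 1 <= - (Bnd l r ws lam)%:Z by rewrite -lerBrDr.
rewrite /Dset /Clam; case: ifP => _.
  by apply/memC_shift; apply: beta_low; exact: le_trans hy1 h1.
apply: beta_low; apply: le_trans h1; apply: le_trans hy1; by rewrite lerDl.
Qed.

Lemma Dclam_up l d H r ws lam q y : (q < l)%N ->
  memC (Dset l d H r ws (Clam r ws lam) q) y -> y <= (Bnd l r ws lam)%:Z.
Proof.
move=> ql; have [_ h2] := Bnd_spec r ws lam ql.
rewrite /Dset /Clam; case: ifP => _.
  move/memC_shift/beta_up => h; apply: le_trans (le_trans h h2).
  by rewrite lerDl.
by move/beta_up => h; exact: le_trans h h2.
Qed.

Lemma ind_iff (P Q : Prop) : (P <-> Q) -> ind P = ind Q.
Proof.
move=> E; rewrite /ind; case: excluded_middle_informative => hp;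
  case: excluded_middle_informative => hq //; exfalso; [apply: hq; exact/E|apply: hp; exact/E].
Qed.

Lemma Pset_bounds l d H r ws lam p : Hyp l d H r ws -> (p < l)%N ->
  (forall x, x <= -((Bnd l r ws lam)%:Z) - 1 -> Pset l d H r ws lam p x) /\
  (forall x, Pset l d H r ws lam p x -> x <= (Bnd l r ws lam)%:Z + 1).
Proof.
move=> Hy pl; have d0 : (0 < d)%N by case: Hy.
have [td ht] := tt_spec Hy pl.
have ps := mem_chain pl ht.
rewrite /Pset /mult /kk; split.
  move=> x hx; rewrite bracket_chain //.
  rewrite big_seq (eq_bigr (fun _ => 1%N)) -?big_seq ?sum1_size ?index_mem //.
  move=> q qs; apply: ind_T; apply: Dclam_low (chain_lt qs) _.
  case: ifP => _ //; apply: le_trans hx; by rewrite lerBlDr lerDl.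
move=> x; rewrite bracket_chain //.
set Y := (if _ then _ else _) => hP.
have [q qs hq] : exists2 q, q \in chainT l d H r ws (tt l d H r ws p) &
    memC (Dset l d H r ws (Clam r ws lam) q) Y.
  apply: NNPP => hn; move: hP; rewrite big1_seq //.
  move=> q /andP [_ qs]; apply: ind_F => hq; apply: hn; exists q => //.
have := Dclam_up (chain_lt qs) hq; rewrite /Y; case: ifP => _ h.
  by rewrite -lerBlDr.
by apply: le_trans h _; rewrite lerDl.
Qed.

Lemma Ctc_spec l d H r ws lam p : Hyp l d H r ws -> (p < l)%N ->
  strictly_decreasing (Ctc l d H r ws lam p) /\
  (forall x, memC (Ctc l d H r ws lam p) x <-> Pset l d H r ws lam p x).
Proof.
move=> Hy pl; have [h1 h2] := Pset_bounds lam Hy pl; exact: enumC_spec h1 h2.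
Qed.

Lemma KEY l d H r ws lam p : Hyp l d H r ws -> (p < l)%N -> forall y,
  memC (Dset l d H r ws (Ctc l d H r ws lam) p) y <->
  (kk l d H r ws p < mult l d H r ws lam (tt l d H r ws p) y)%N.
Proof.
move=> Hy pl y; have [_ hm] := Ctc_spec lam Hy pl.
rewrite /Dset; case: ifP => h0.
  by rewrite memC_shift hm /Pset h0 addrK.
by rewrite hm /Pset h0.
Qed.

Theorem mainTheorem4 (l n d : nat) (H : nat -> rat) (r : nat -> int) (ws : seq nat)
  (lam : nat -> seq nat) :
  (0 < l)%N -> (0 < n)%N -> (0 < d)%N ->
  (forall i, (0 < i < l)%N -> exists z : int, (d%:R * H i)%R = z%:~R) ->
  (\sum_(j < l) r j)%R = 0%R ->
  all (fun i => 0 < i < l)%N ws ->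
  (forall j, (j < l)%N -> (0 <= eps l H r ws j <= 1)%R) ->
  is_multipartition l n lam ->
  exists Ct : nat -> nat -> int,
    good_tuple l d H r ws lam Ct /\
    (forall Ct', good_tuple l d H r ws lam Ct' ->
       forall p, (p < l)%N -> forall i, Ct' p i = Ct p i).
Proof.
move=> l0 _ d0 Hz _ Hws He _.
have Hy : Hyp l d H r ws by split.
set Ct := Ctc l d H r ws lam.
exists Ct; split.
  split; [|split; [|split]].
  - by move=> p pl; case: (Ctc_spec lam Hy pl).
  - move=> t td x; set s := chainT l d H r ws t.
    rewrite bracket_chain //.
    have -> : (\sum_(q <- s) ind (memC (Dset l d H r ws Ct q) x))%N =
              (\sum_(q <- s) (index q s < mult l d H r ws lam t x))%N.
      rewrite !big_seq; apply: eq_bigr => q qs; rewrite -ind_bool; apply: ind_iff.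
      have ql := chain_lt qs; have [_ hq] := tt_spec Hy ql.
      have [E1 E2] := chain_same hq qs.
      by rewrite KEY // /kk /mult E1 E2.
    rewrite sum_seq_ord; transitivity (\sum_(i < size s) (i < mult l d H r ws lam t x)%N)%N.
      by apply: eq_bigr => i _; rewrite index_uniq // uniq_chain.
    rewrite sum_lt_min; apply/minn_idPl.
    by rewrite /mult bracket_chain // sum_ind_seq_le.
  - move=> p /andP [p0 pl] e0 x hx.
    have ql : (p.-1 < l)%N by apply: leq_ltn_trans pl; exact: leq_pred.
    have [_ ht] := tt_spec Hy pl; have [_ htq] := tt_spec Hy ql.
    have htp : inI l d H r ws (tt l d H r ws p) p.-1 by rewrite (eps_zero_inI d (tt l d H r ws p) p0 e0).
    have Et := inI_uniq htq htp.
    have h0 : inI l d H r ws 0 p.-1 = inI l d H r ws 0 p by rewrite (eps_zero_inI d 0 p0 e0).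
    apply/(memC_Dset l d H r ws Ct p.-1 x); rewrite h0; apply/KEY => //.
    have := proj1 (KEY lam Hy pl _) (proj2 (memC_Dset l d H r ws Ct p x) hx).
    rewrite Et => h; apply: leq_ltn_trans h; rewrite /kk Et.
    apply: idx_mono => //; first exact: mem_chain pl ht.
    - exact: mem_chain ql htp.
    - exact: leq_pred.
  - move=> h00 x hx.
    have ll : (l.-1 < l)%N by rewrite prednK.
    have hl := inI_last Hy.
    have nl : ~~ inI l d H r ws 0 l.-1 by apply/negP; exact: inI_0d d0 hl.
    have [_ h0t] := tt_spec Hy (l0 : (0 < l)%N); have [_ hlt] := tt_spec Hy ll.
    have E0 := inI_uniq h0t h00; have El := inI_uniq hlt hl.
    apply/(memC_Dset l d H r ws Ct l.-1 x); rewrite (negbTE nl); apply/KEY => //.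
    rewrite -(Dset_T _ h00) in hx.
    have := proj1 (KEY lam Hy l0 _) hx.
    rewrite /mult /kk El E0 bracket_0d chainT_0d; apply: leq_trans; rewrite ltnS.
    rewrite /chainT eqxx /= !index_cat mem_fil ll hl /=.
    have -> : (0 \in fil l d H r ws d) = false.
      by rewrite mem_fil; apply/negP => /andP [_ h]; exact: inI_0d d0 h h00.
    apply: leq_trans (leq_addr _ _); apply: ltnW; rewrite index_mem mem_fil ll hl //.
move=> Ct' Hg p pl i.
have [hsd hm] := Ctc_spec lam Hy pl.
have [Hsd [Hbr _]] := Hg.
apply: sd_ext (Hsd p pl) hsd _ i => x.
have [td ht] := tt_spec Hy pl.
set Y := if inI l d H r ws 0 p then x - 1 else x.
set s := chainT l d H r ws (tt l d H r ws p).
have E : (kk l d H r ws p < mult l d H r ws lam (tt l d H r ws p) Y)%N <->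
         memC (Dset l d H r ws Ct' p) Y.
  rewrite /mult -(Hbr _ td Y) bracket_chain // sum_seq_ord.
  have ps := mem_chain pl ht.
  have kl : (kk l d H r ws p < size s)%N by rewrite /kk index_mem.
  apply: iff_trans (antitone_count (Q := fun i => memC (Dset l d H r ws Ct' (nth 0%N s i)) Y) _ kl) _.
    by move=> i0 j0 ij js; exact: nest Hy Hg i0 j0 Y ij js.
  by rewrite /kk nth_index.
split.
  move=> hx; apply/(memC_Dset l d H r ws Ct p x); apply/KEY => //.
  apply/E; apply/(memC_Dset l d H r ws Ct' p x); exact: hx.
move=> hx; apply/(memC_Dset l d H r ws Ct' p x); apply/E; apply/KEY => //.
apply/(memC_Dset l d H r ws Ct p x); exact: hx.
Qed.
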